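(* Let $\tilde q=q^2$. For all integers $v\geq 1$ and $L\geq 0$, \[ \sum_{n_1,\ldots,n_v\geq 0} \frac{\tilde q^{\sum_{i=1}^v N_i(N_i+1)}}{(\tilde q)_{n_1}\cdots(\tilde q)_{n_{v-1}}(\tilde q)_{2n_v+1}}\cdot\frac{(q^3;q^6)_{n_v}}{(q;q^2)_{n_v}}\cdot\frac{(\tilde q)_{2L+1}}{(\tilde q)_{L-N_1}} =\sum_{j=-\infty}^{\infty} (-1)^j q^{(2v+1)j^2+2vj}\left(\frac{j+1}{3}\right){2L+1 \brack L-j}_{\tilde q}, \] where $N_i=n_i+n_{i+1}+\cdots+n_v$ for $i=1,\ldots,v$ (for $v=1$ the product $(\tilde q)_{n_1}\cdots(\tilde q)_{n_{v-1}}$ is empty).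
   Context: For a variable $a$ and integer $n\ge 0$, $(a;q)_n=(1-a)(1-aq)\cdots(1-aq^{n-1})$, and $(\tilde q)_n=(\tilde q;\tilde q)_n$; by convention $1/(\tilde q)_n=0$ for negative integers $n$. The $q$-binomial coefficient in base $\tilde q$ is ${A \brack B}_{\tilde q}=\frac{(\tilde q;\tilde q)_A}{(\tilde q;\tilde q)_B(\tilde q;\tilde q)_{A-B}}$ if $0\le B\le A$ are integers, and $0$ otherwise. $\left(\frac{j}{3}\right)$ is the Legendre symbol modulo 3: it equals $1$ if $j\equiv 1 \pmod 3$, $-1$ if $j\equiv -1\pmod 3$, and $0$ if $3\mid j$. *)

(* Defs.v *)
From HB Require Import structures.
From mathcomp Require Import all_boot all_order all_algebra.
Set Implicit Arguments. Unset Strict Implicit. Unset Printing Implicit Defensive.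
Import Order.TTheory GRing.Theory Num.Theory.
Local Open Scope ring_scope.

Definition qpoch {R : ringType} (a q : R) (n : nat) : R :=
  \prod_(k < n) (1 - a * q ^+ k).

Definition qfac {R : ringType} (q : R) (n : nat) : R := qpoch q q n.

Definition invqfac {R : unitRingType} (q : R) (n : int) : R :=
  if (n < 0)%R then 0 else (qfac q `|n|%N)^-1.

Definition qbinom {R : unitRingType} (q : R) (A B : int) : R :=
  if (0 <= B) && (B <= A) then
    qfac q `|A|%N / (qfac q `|B|%N * qfac q `|A - B|%N)
  else 0.

Definition leg3 {R : ringType} (j : int) : R :=
  if (j %% 3)%Z == 1 then 1 else if (j %% 3)%Z == 2 then -1 else 0.

(* Main.v *)
Require Import Defs.
From HB Require Import structures.
From mathcomp Require Import all_boot all_order all_algebra.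
From mathcomp Require Import zify ring lra.
Import Order.TTheory GRing.Theory Num.Theory.
Set Implicit Arguments. Unset Strict Implicit. Unset Printing Implicit Defensive.
Local Open Scope ring_scope.

Section Basics.
Variable R : numFieldType.

Lemma sub1X_neq0 (x : R) k : `|x| < 1 -> (0 < k)%N -> 1 - x ^+ k != 0.
Proof.
move=> hx hk; rewrite subr_eq0; apply/eqP=> h.
have : `|x ^+ k| < 1 by rewrite normrX exprn_ilt1 // -lt0n.
by rewrite -h normr1 ltxx.
Qed.

Lemma qfacS (x : R) n : qfac x n.+1 = qfac x n * (1 - x ^+ n.+1).
Proof. by rewrite /qfac /qpoch big_ord_recr /= exprS. Qed.

Lemma qfac0 (x : R) : qfac x 0 = 1.
Proof. by rewrite /qfac /qpoch big_ord0. Qed.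

Lemma qfac_neq0 (x : R) n : `|x| < 1 -> qfac x n != 0.
Proof.
move=> hx; elim: n => [|n IH]; first by rewrite qfac0 oner_eq0.
by rewrite qfacS mulf_neq0 // sub1X_neq0.
Qed.

Lemma qpochS (a x : R) n : qpoch a x n.+1 = qpoch a x n * (1 - a * x ^+ n).
Proof. by rewrite /qpoch big_ord_recr. Qed.

Lemma qpoch0 (a x : R) : qpoch a x 0 = 1.
Proof. by rewrite /qpoch big_ord0. Qed.

Lemma invqfac_nat (x : R) (n : nat) : invqfac x n%:Z = (qfac x n)^-1.
Proof. by []. Qed.

Lemma invqfac_neg (x : R) (z : int) : z < 0 -> invqfac x z = 0.
Proof. by rewrite /invqfac => ->. Qed.

End Basics.

Section Binom.
Variable R : numFieldType.
Variable p : R.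
Hypothesis hp : `|p| < 1.

Definition C (n : nat) (B : int) : R := qbinom p n%:Z B.

Lemma C_out n B : ~~ ((0 <= B) && (B <= n%:Z)) -> C n B = 0.
Proof. by rewrite /C /qbinom => /negbTE ->. Qed.

Lemma C_supp n B : C n B != 0 -> (0 <= B) && (B <= n%:Z).
Proof. by apply: contraR => /C_out ->; rewrite eqxx. Qed.

Lemma C_nat n k : (k <= n)%N -> C n k%:Z = qfac p n / (qfac p k * qfac p (n - k)).
Proof.
move=> hk; rewrite /C /qbinom lez_nat hk /= subzn //.
Qed.

Lemma C_sym n B : C n B = C n (n%:Z - B).
Proof.
rewrite /C /qbinom.
have -> : ((0 <= n%:Z - B) && (n%:Z - B <= n%:Z)) = ((0 <= B) && (B <= n%:Z)).
  by apply/idP/idP => /andP [h1 h2]; apply/andP; split; lia.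
case: ifP => // _.
by rewrite (_ : n%:Z - (n%:Z - B) = B) ?[qfac p `|B| * _]mulrC //; lia.
Qed.

Lemma CPA n B : C n.+1 B = C n (B - 1) + p ^+ `|B| * C n B.
Proof.
have [hB|hB] := ltP B 0.
  by rewrite !C_out ?mulr0 ?addr0 //; apply/negP => /andP []; lia.
have -> : B = (`|B|)%:Z by lia.
move: (`|B|)%N => k {hB}.
case: k => [|b].
  rewrite (@C_out n (0 - 1)); last by apply/negP => /andP []; lia.
  by rewrite !C_nat // !subn0 qfac0 expr0 mul1r add0r !mul1r !divff // qfac_neq0.
have -> : (b.+1%:Z - 1 = b%:Z) by lia.
have [hbn|hbn] := leqP b.+1 n; last first.
  have [hbn'|hbn'] := leqP b n; last first.
    by rewrite !C_out ?mulr0 ?addr0 //; apply/negP => /andP []; lia.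
  have hb : b = n by lia.
  subst b.
  rewrite (@C_out n n.+1); last by apply/negP => /andP []; lia.
  by rewrite !C_nat // !subnn qfac0 mulr0 addr0 !mulr1 !divff // qfac_neq0.
set m := (n - b.+1)%N.
have -> : n = (m + b.+1)%N by rewrite subnK.
rewrite !C_nat; try lia.
have -> : ((m + b.+1).+1 - b.+1 = m.+1)%N by lia.
have -> : ((m + b.+1) - b = m.+1)%N by lia.
have -> : ((m + b.+1) - b.+1 = m)%N by lia.
have h1 := qfac_neq0 b hp; have h2 := qfac_neq0 m hp.
have h3 := qfac_neq0 (m + b.+1) hp.
have h4 := sub1X_neq0 hp (ltn0Sn b); have h5 := sub1X_neq0 hp (ltn0Sn m).
rewrite /= in h4 h5.
rewrite !qfacS.
have -> : p ^+ (m + b.+1).+1 = p ^+ b.+1 * p ^+ m.+1 by rewrite -exprD; congr (_ ^+ _); lia.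
rewrite absz_nat.
by field; rewrite h1 h2 h4 h5.
Qed.

Lemma CPB n B : C n.+1 B = p ^+ `|n.+1%:Z - B| * C n (B - 1) + C n B.
Proof.
rewrite {1}C_sym CPA [LHS]addrC; congr (_ * _ + _).
  by rewrite C_sym; congr (C _ _); lia.
by rewrite C_sym; congr (C _ _); lia.
Qed.

Lemma Cexp (x : R) n B e1 e2 : ((0 <= B) && (B <= n%:Z) -> e1 = e2) ->
  x ^+ e1 * C n B = x ^+ e2 * C n B.
Proof.
move=> h; have [/eqP ->|/C_supp /h -> //] := boolP (C n B == 0).
by rewrite !mulr0.
Qed.

Lemma C2 n k : C n.+2 k = (1 + p ^+ n.+1) * C n (k - 1) + p ^+ `|k| * C n k
   + p ^+ `|n.+2%:Z - k| * C n (k - 2).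
Proof.
rewrite CPA !CPB.
have -> : k - 1 - 1 = k - 2 by lia.
have -> : n.+1%:Z - (k - 1) = n.+2%:Z - k by lia.
rewrite mulrDr mulrA -exprD.
rewrite (@Cexp p n (k - 1) (`|k| + `|n.+1%:Z - k|) n.+1); last by move=> /andP[]; lia.
ring.
Qed.

End Binom.
Section Zsum.
Variable R : numFieldType.

Definition zsum (N : nat) (F : int -> R) := \sum_(0 <= k < 2 * N) F (k%:Z - N%:Z).
Definition supp (N : nat) (F : int -> R) :=
  forall j : int, (j < - N%:Z) || (N%:Z <= j) -> F j = 0.

Lemma eq_zsum N F G : (forall j, F j = G j) -> zsum N F = zsum N G.
Proof. by move=> h; apply: eq_bigr => k _; rewrite h. Qed.

Lemma supp_mono N M F : (N <= M)%N -> supp N F -> supp M F.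
Proof. by move=> hNM h j hj; apply: h; move: hj => /orP[] ?; apply/orP; [left|right]; lia. Qed.

Lemma zsumS N F : supp N F -> zsum N.+1 F = zsum N F.
Proof.
move=> h; rewrite /zsum.
have -> : (2 * N.+1 = (2 * N).+2)%N by lia.
rewrite big_nat_recl // big_nat_recr //=.
rewrite h; last by apply/orP; left; lia.
rewrite (h (_ - _)); last by apply/orP; right; lia.
rewrite add0r addr0; apply: eq_bigr => k _; congr F; lia.
Qed.

Lemma zsum_ge N M F : supp N F -> (N <= M)%N -> zsum M F = zsum N F.
Proof.
move=> h; elim: M => [|M IH]; first by rewrite leqn0 => /eqP ->.
rewrite leq_eqVlt => /orP[/eqP -> //|hM].
by rewrite zsumS ?IH //; apply: supp_mono h; lia.
Qed.

Lemma zsum_shiftL N F : supp N F -> zsum N.+1 (fun j => F (j - 1)) = zsum N F.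
Proof.
move=> h; rewrite /zsum.
have -> : (2 * N.+1 = (2 * N).+2)%N by lia.
rewrite big_nat_recl // big_nat_recl //=.
rewrite h; last by apply/orP; left; lia.
rewrite (h (_ - _)); last by apply/orP; left; lia.
rewrite !add0r; apply: eq_bigr => k _; congr F; lia.
Qed.

Lemma zsum_shiftR N F : supp N F -> zsum N.+1 (fun j => F (j + 1)) = zsum N F.
Proof.
move=> h; rewrite /zsum.
have -> : (2 * N.+1 = (2 * N).+2)%N by lia.
rewrite big_nat_recr // big_nat_recr //=.
rewrite h; last by apply/orP; right; lia.
rewrite (h (_ + _)); last by apply/orP; right; lia.
rewrite !addr0; apply: eq_bigr => k _; congr F; lia.
Qed.

Lemma zsumD N F G : zsum N (fun j => F j + G j) = zsum N F + zsum N G.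
Proof. by rewrite /zsum big_split. Qed.

Lemma zsumZ N c F : zsum N (fun j => c * F j) = c * zsum N F.
Proof. by rewrite /zsum mulr_sumr. Qed.

End Zsum.
Section Base.
Variable R : numFieldType.
Variable q : R.
Hypothesis hq : `|q| < 1.
Local Notation p := (q ^+ 2).

Lemma hp : `|p| < 1.
Proof. by rewrite normrX exprn_ilt1. Qed.

Definition eps (j : int) : R := (-1) ^+ `|j| * leg3 (j + 1).

Lemma sgn_flip (a b : nat) : (a = b + 1 \/ b = a + 1)%N -> (-1) ^+ a = - (-1) ^+ b :> R.
Proof. by case => ->; rewrite exprD expr1 mulrN1 ?opprK. Qed.

Lemma leg3_sum (j : int) : leg3 j + leg3 (j + 1) + leg3 (j + 2) = 0 :> R.
Proof.
rewrite /leg3 -(modzDml j 1) -(modzDml j 2).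
have : (0 <= j %% 3)%Z /\ (j %% 3 < 3)%Z by split; [apply: modz_ge0 | apply: ltz_pmod].
move: (j %% 3)%Z => r hr.
have : r = 0 \/ r = 1 \/ r = 2 by lia.
by case=> [->|[->|->]] /=; rewrite ?addr0 ?add0r ?addrN ?addNr.
Qed.

Lemma eps_rec j : eps (j + 1) = eps j - eps (j - 1).
Proof.
rewrite /eps (@sgn_flip `|j + 1| `|j|); last lia.
rewrite (@sgn_flip `|(j - 1)%R| `|j|); last lia.
rewrite (_ : j - 1 + 1 = j); last lia.
have := leg3_sum j; rewrite (_ : j + 1 + 1 = j + 2); last lia.
move=> h; rewrite -addrA in h; rewrite (_ : leg3 (j + 2) = - (leg3 j + leg3 (j+1))).
  ring.
rewrite -[LHS]subr0 -h; ring.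
Qed.

Definition w (L : nat) (j : int) := q ^+ (`|j| * `|j|) * C p (2 * L + 1) (L%:Z - j).

Lemma qC (x : R) n B a b c d : ((0 <= B) && (B <= n%:Z) -> (a + b = c + d)%N) ->
  x ^+ a * (x ^+ b * C p n B) = x ^+ c * (x ^+ d * C p n B).
Proof. by move=> h; rewrite !mulrA -!exprD; apply: Cexp. Qed.

Lemma w_rec L j : w L.+1 j = (1 + q ^+ (4 * L + 4)) * w L j
   + q ^+ (2 * L + 1) * w L (j - 1) + q ^+ (2 * L + 3) * w L (j + 1).
Proof.
rewrite /w.
have -> : (2 * L.+1 + 1 = (2 * L + 1).+2)%N by lia.
rewrite C2; last exact: hp.
rewrite -!exprM.
have -> : (2 * (2 * L + 1).+1 = 4 * L + 4)%N by lia.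
have -> : L.+1%:Z - j - 1 = L%:Z - j by lia.
have -> : L.+1%:Z - j - 2 = L%:Z - (j + 1) by lia.
have -> : L.+1%:Z - j = L%:Z - (j - 1) by lia.
have t2 : q ^+ (`|j| * `|j|)%N * (q ^+ (2 * `|(L%:Z - (j - 1))%R|)%N * C p (2 * L + 1) (L%:Z - (j - 1)))
  = q ^+ (2 * L + 1) * (q ^+ (`|(j - 1)%R| * `|(j - 1)%R|)%N * C p (2 * L + 1) (L%:Z - (j - 1))).
  by apply: qC => /andP [h1 h2]; nia.
have t3 : q ^+ (`|j| * `|j|)%N * (q ^+ (2 * `|((2 * L + 1).+2%:Z - (L%:Z - (j - 1)))%R|)%N * C p (2 * L + 1) (L%:Z - (j + 1)))
  = q ^+ (2 * L + 3) * (q ^+ (`|(j + 1)%R| * `|(j + 1)%R|)%N * C p (2 * L + 1) (L%:Z - (j + 1))).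
  by apply: qC => /andP [h1 h2]; nia.
rewrite -t2 -t3; ring.
Qed.

Lemma supp_w L (c : int -> R) : supp L.+1 (fun j => c j * w L j).
Proof.
move=> j hj; rewrite /w C_out ?mulr0 //; apply/negP => /andP [h1 h2].
move: hj => /orP []; lia.
Qed.

End Base.
Section T.
Variable R : numFieldType.
Variable q : R.
Hypothesis hq : `|q| < 1.
Local Notation p := (q ^+ 2).
Lemma zsumB N (F G : int -> R) : zsum N (fun j => F j - G j) = zsum N F - zsum N G.
Proof. by rewrite /zsum sumrB. Qed.
End T.
Section T2.
Variable R : numFieldType.
Variable q : R.
Hypothesis hq : `|q| < 1.
Local Notation p := (q ^+ 2).
Lemma w_zsum L (c : int -> R) : zsum L.+2 (fun j => c j * w q L.+1 j) =
  (1 + q ^+ (4 * L + 4)) * zsum L.+1 (fun j => c j * w q L j)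
  + q ^+ (2 * L + 1) * zsum L.+1 (fun j => c (j + 1) * w q L j)
  + q ^+ (2 * L + 3) * zsum L.+1 (fun j => c (j - 1) * w q L j).
Proof.
have E : forall j, c j * w q L.+1 j = (1 + q ^+ (4 * L + 4)) * (c j * w q L j)
  + q ^+ (2 * L + 1) * ((fun j => c (j + 1) * w q L j) (j - 1))
  + q ^+ (2 * L + 3) * ((fun j => c (j - 1) * w q L j) (j + 1)).
  move=> j /=. rewrite (w_rec hq). rewrite (_ : j - 1 + 1 = j); last lia.
  rewrite (_ : j + 1 - 1 = j); last lia.
  by rewrite !mulrDr; congr (_ + _ + _); rewrite mulrCA.
rewrite (eq_zsum _ E) !zsumD !zsumZ.
rewrite (zsum_shiftL (F := fun j => c (j + 1) * w q L j)); last exact: supp_w.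
rewrite (zsum_shiftR (F := fun j => c (j - 1) * w q L j)); last exact: supp_w.
by rewrite zsumS //; exact: supp_w.
Qed.
End T2.
Section FG.
Variable R : numFieldType.
Variable q : R.
Hypothesis hq : `|q| < 1.
Local Notation p := (q ^+ 2).

Definition f L := zsum L.+1 (fun j => eps R j * w q L j).
Definition g L := zsum L.+1 (fun j => eps R (j - 1) * w q L j).
Definition P L := \prod_(k < L) (1 + q ^+ (2 * k + 1) + q ^+ (4 * k + 2)).

Lemma f_rec L : f L.+1 = (1 + q ^+ (4 * L + 4)) * f L + q ^+ (2 * L + 1) * (f L - g L)
   + q ^+ (2 * L + 3) * g L.
Proof.
rewrite /f (w_zsum hq); congr (_ + _ * _ + _ * _).
by rewrite /g -zsumB; apply: eq_zsum => j; rewrite (eps_rec hq) mulrBl.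
Qed.

Lemma g_rec L : g L.+1 = (1 + q ^+ (4 * L + 4)) * g L + q ^+ (2 * L + 1) * f L
   + q ^+ (2 * L + 3) * (g L - f L).
Proof.
rewrite /g (w_zsum hq); congr (_ + _ * _ + _ * _).
  by apply: eq_zsum => j; rewrite (_ : j + 1 - 1 = j) //; lia.
rewrite /f -zsumB; apply: eq_zsum => j.
have := eps_rec hq (j - 1); rewrite (_ : j - 1 + 1 = j); last lia.
rewrite (_ : j - 1 - 1 = j - 2); last lia.
move=> h2; rewrite -mulrBl; congr (_ * _); rewrite h2.
by rewrite opprB addrCA subrr addr0.
Qed.

Lemma fg0 : f 0 = 1 /\ g 0 = - q.
Proof.
rewrite /f /g /zsum /= !big_nat_recl // big_geq // /w /eps /leg3 /= /C /qbinom /=.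
rewrite big_geq // !(subnn, sub0n, subn0, addn0, add0n, muln0, mul0n, mul1n, muln1, subSS).
rewrite !qfac0 !expr0 ?mul1r ?mulr0 ?add0r ?addr0 !mulr1 !mul0r !divff ?qfac_neq0 //; last exact: hp.
rewrite add0r addr0 mulr1 expr1; split => //.
by rewrite -signr_odd /= expr0 mul1r mulN1r.
Qed.

Lemma PS L : P L.+1 = P L * (1 + q ^+ (2 * L + 1) + q ^+ (4 * L + 2)).
Proof. by rewrite /P big_ord_recr. Qed.

Lemma fg_closed L : f L = P L /\ g L = - q ^+ (2 * L + 1) * P L.
Proof.
elim: L => [|L [IHf IHg]].
  by have [-> ->] := fg0; rewrite /P big_ord0 mulr1 expr1.
rewrite f_rec g_rec IHf IHg PS.
set Q := q ^+ (2 * L + 1).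
have e1 : q ^+ (4 * L + 4) = Q * Q * q ^+ 2 by rewrite -!exprD; congr (_ ^+ _); lia.
have e2 : q ^+ (2 * L + 3) = Q * q ^+ 2 by rewrite -!exprD; congr (_ ^+ _); lia.
have e3 : q ^+ (4 * L + 2) = Q * Q by rewrite -!exprD; congr (_ ^+ _); lia.
have e4 : q ^+ (2 * L.+1 + 1) = Q * q ^+ 2 by rewrite -!exprD; congr (_ ^+ _); lia.
rewrite e1 e2 e3 e4; split; ring.
Qed.

End FG.
Section Bailey.
Variable R : numFieldType.
Variable p : R.
Hypothesis hp : `|p| < 1.

Definition Dd (L : nat) (j : int) : R := invqfac p (L%:Z - j) * invqfac p (L%:Z + j + 1).

Lemma invqfac_ge0 (z : int) : 0 <= z -> invqfac p z = (qfac p `|z|)^-1.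
Proof. by move=> h; rewrite /invqfac ltNge h. Qed.

Lemma C_D L j : C p (2 * L + 1) (L%:Z - j) = qfac p (2 * L + 1) * Dd L j.
Proof.
have [h|h] := boolP ((0 <= L%:Z - j) && (L%:Z - j <= (2 * L + 1)%N%:Z)).
  rewrite /C /qbinom h /Dd !invqfac_ge0; [|lia|lia].
  rewrite (_ : ((2 * L + 1)%N%:Z - (L%:Z - j)) = L%:Z + j + 1); last lia.
  by rewrite invfM.
rewrite C_out // /Dd.
have : (L%:Z - j < 0) \/ (L%:Z + j + 1 < 0) by move: h; rewrite negb_and -!ltNge => /orP[]; lia.
by case=> /invqfac_neg ->; rewrite ?mul0r ?mulr0.
Qed.

Lemma core t c : \sum_(0 <= s < t.+1) C p t s%:Z * p ^+ (s * s + c * s)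
   * (qfac p (c + t) / qfac p (c + s)) = 1.
Proof.
elim: t c => [|t IH] c.
  rewrite big_nat1 /C /qbinom /= !qfac0 !addn0 mul1r !mulr1 !divff ?qfac_neq0 //.
  by rewrite invr1 !muln0 expr0 !mulr1.
under eq_big_nat => s _ do rewrite CPA //.
under eq_big_nat => s _ do rewrite mulrDl mulrDl.
rewrite big_split /= [X in X + _]big_nat_recl // [X in _ + X]big_nat_recr //=.
rewrite (@C_out _ _ t (0%:Z - 1)); last by apply/negP => /andP[]; lia.
rewrite (@C_out _ _ t (t.+1)); last by apply/negP => /andP[]; lia.
rewrite !mulr0 !mul0r add0r addr0 -big_split /= -[RHS](IH c.+1).
apply: eq_big_nat => s hs.
rewrite (_ : s.+1%:Z - 1 = s%:Z); last lia.
have hF := qfac_neq0 (c + s) hp.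
have hE := sub1X_neq0 hp (ltn0Sn (c + s)).
have q1 : qfac p (c + s.+1) = qfac p (c + s) * (1 - p ^+ (c + s).+1).
  by rewrite -qfacS; congr qfac; lia.
have q2 : qfac p (c.+1 + s) = qfac p (c + s) * (1 - p ^+ (c + s).+1).
  by rewrite -qfacS; congr qfac; lia.
have q3 : qfac p (c.+1 + t) = qfac p (c + t.+1) by congr qfac; lia.
rewrite q1 q2 q3.
have e1 : p ^+ (s.+1 * s.+1 + c * s.+1) = p ^+ (s * s + c.+1 * s) * p ^+ (c + s).+1.
  by rewrite -exprD; congr (_ ^+ _); nia.
have e2 : p ^+ s * p ^+ (s * s + c * s) = p ^+ (s * s + c.+1 * s).
  by rewrite -exprD; congr (_ ^+ _); nia.
rewrite e1 -e2.
field.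
by rewrite hF hE.
Qed.

Lemma core' t c : \sum_(0 <= s < t.+1)
    p ^+ (s * s + c * s) * (qfac p s * qfac p (t - s) * qfac p (c + s))^-1
  = (qfac p t * qfac p (c + t))^-1.
Proof.
have hT := qfac_neq0 t hp; have hCT := qfac_neq0 (c + t) hp.
have E : \sum_(0 <= s < t.+1) C p t s%:Z * p ^+ (s * s + c * s)
   * (qfac p (c + t) / qfac p (c + s)) = (qfac p t * qfac p (c + t)) *
   \sum_(0 <= s < t.+1)
    p ^+ (s * s + c * s) * (qfac p s * qfac p (t - s) * qfac p (c + s))^-1.
  rewrite mulr_sumr; apply: eq_big_nat => s hs; rewrite C_nat; last lia.
  have h1 := qfac_neq0 s hp; have h2 := qfac_neq0 (t - s) hp; have h3 := qfac_neq0 (c + s) hp.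
  by field; rewrite h1 h2 h3.
apply: (@mulfI _ (qfac p t * qfac p (c + t))); first by rewrite mulf_neq0.
by rewrite -E core mulfV // mulf_neq0.
Qed.

Lemma Kpos L m : \sum_(0 <= M < L.+1) p ^+ (M * M.+1) * invqfac p (L%:Z - M%:Z) * Dd M m%:Z
  = p ^+ (m * m.+1) * Dd L m%:Z.
Proof.
have [hL|hL] := ltnP L m.
  rewrite /Dd (@invqfac_neg _ p (L%:Z - m%:Z)); last lia.
  rewrite !mul0r mulr0 big_nat_cond big1 // => M /andP[/andP[_ hM] _].
  by rewrite /Dd (@invqfac_neg _ p (M%:Z - m%:Z)) ?mul0r ?mulr0 //; lia.
rewrite (big_cat_nat _ (n := m)) //=; last lia.
rewrite big_nat_cond big1 ?add0r; last first.
  move=> M /andP[/andP[_ hM] _].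
  by rewrite /Dd (@invqfac_neg _ p (M%:Z - m%:Z)) ?mul0r ?mulr0 //; lia.
rewrite -{1}(add0n m) big_addn.
have [t ->] : exists t, L = (m + t)%N by exists (L - m)%N; lia.
rewrite (_ : ((m + t).+1 - m = t.+1)%N); last lia.
have -> : Dd (m + t) m%:Z = (qfac p t * qfac p (2 * m + 1 + t))^-1.
  rewrite /Dd !invqfac_ge0; [|lia|lia].
  rewrite (_ : `|((m + t)%N%:Z - m%:Z)%R|%N = t); last lia.
  rewrite (_ : `|((m + t)%N%:Z + m%:Z + 1)%R|%N = (2 * m + 1 + t)%N); last lia.
  by rewrite invfM.
rewrite -core' mulr_sumr.
apply: eq_big_nat => s hs.
rewrite /Dd !invqfac_ge0; [|lia|lia|lia].
rewrite (_ : `|((m + t)%N%:Z - (s + m)%N%:Z)%R|%N = (t - s)%N); last lia.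
rewrite (_ : `|((s + m)%N%:Z - m%:Z)%R|%N = s); last lia.
rewrite (_ : `|((s + m)%N%:Z + m%:Z + 1)%R|%N = (2 * m + 1 + s)%N); last lia.
rewrite (_ : ((s + m) * (s + m).+1 = m * m.+1 + (s * s + (2 * m + 1) * s))%N); last nia.
rewrite exprD !invfM; ring.
Qed.

Lemma Kall L (j : int) : \sum_(0 <= M < L.+1) p ^+ (M * M.+1) * invqfac p (L%:Z - M%:Z) * Dd M j
  = p ^+ (`|j| * `|(j + 1)%R|)%N * Dd L j.
Proof.
case: j => m.
  by rewrite Kpos (_ : `|(m%:Z + 1)%R|%N = m.+1) //; lia.
have E : forall M, Dd M (Negz m) = Dd M m%:Z.
  by move=> M; rewrite /Dd mulrC; congr (invqfac p _ * invqfac p _); lia.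
under eq_big_nat => M _ do rewrite E.
rewrite Kpos E (_ : `|Negz m|%N = m.+1) // (_ : `|(Negz m + 1)%R|%N = m); last lia.
by rewrite mulnC.
Qed.

End Bailey.
Section Main.
Variable R : numFieldType.
Variable q : R.
Hypothesis hq : `|q| < 1.
Local Notation p := (q ^+ 2).

Definition b0 (M : nat) : R := qpoch (q ^+ 3) (q ^+ 6) M / qpoch q (q ^+ 2) M / qfac p M.*2.+1.

Fixpoint beta (v : nat) (L : nat) : R :=
  match v with
  | 0 => b0 L
  | v'.+1 => \sum_(0 <= M < L.+1) p ^+ (M * M.+1) * invqfac p (L%:Z - M%:Z) * beta v' M
  end.

Definition a (v : nat) (j : int) : R :=
  (-1) ^+ `|j| * q ^+ (`|j| * `|j| + 2 * v * (`|j| * `|(j + 1)%R|))%N * leg3 (j + 1).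

Lemma supp_D L (c : int -> R) : supp L.+1 (fun j => c j * Dd p L j).
Proof.
move=> j /orP [] hj; rewrite /Dd.
  by rewrite (@invqfac_neg _ p (L%:Z + j + 1)) ?mulr0 //; lia.
by rewrite (@invqfac_neg _ p (L%:Z - j)) ?mul0r ?mulr0 //; lia.
Qed.

Lemma qpoch_q_neq0 n : qpoch q (q ^+ 2) n != 0.
Proof.
elim: n => [|n IH]; first by rewrite qpoch0 oner_neq0.
rewrite qpochS mulf_neq0 // -exprM -exprS.
exact: (@sub1X_neq0 _ q (2 * n).+1 hq (ltn0Sn _)).
Qed.

Lemma qpoch3 n : qpoch (q ^+ 3) (q ^+ 6) n = qpoch q (q ^+ 2) n * P q n.
Proof.
elim: n => [|n IH]; first by rewrite !qpoch0 /P big_ord0 mulr1.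
rewrite !qpochS IH (PS q).
set Q := q ^+ (2 * n + 1).
have e1 : q ^+ 3 * q ^+ 6 ^+ n = Q * Q * Q by rewrite -exprM -!exprD; congr (_ ^+ _); lia.
have e2 : q * q ^+ 2 ^+ n = Q by rewrite -exprM -exprS; congr (_ ^+ _); lia.
have e3 : q ^+ (4 * n + 2) = Q * Q by rewrite -!exprD; congr (_ ^+ _); lia.
rewrite e1 e2 e3; ring.
Qed.

Lemma bailey0 L : zsum L.+1 (fun j => a 0 j * Dd p L j) = b0 L.
Proof.
have [hf _] := fg_closed hq L.
have hQ := qfac_neq0 (2 * L + 1) (hp hq).
have E : f q L = qfac p (2 * L + 1) * zsum L.+1 (fun j => a 0 j * Dd p L j).
  rewrite /f -zsumZ; apply: eq_zsum => j.
  by rewrite /w C_D; last exact: hp hq; rewrite /a /eps muln0 mul0n addn0; ring.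
rewrite /b0 qpoch3 (_ : L.*2.+1 = 2 * L + 1)%N; last lia.
apply: (mulfI hQ); rewrite -E hf.
have h2 := qpoch_q_neq0 L.
by field; rewrite hQ h2.
Qed.

Lemma aS v j : a v.+1 j = a v j * p ^+ (`|j| * `|(j + 1)%R|)%N.
Proof.
rewrite /a -exprM.
have -> : (`|j| * `|j| + 2 * v.+1 * (`|j| * `|(j + 1)%R|) =
  (`|j| * `|j| + 2 * v * (`|j| * `|(j + 1)%R|)) + 2 * (`|j| * `|(j + 1)%R|))%N by lia.
by rewrite exprD; ring.
Qed.

Lemma bailey v L : zsum L.+1 (fun j => a v j * Dd p L j) = beta v L.
Proof.
elim: v L => [|v IH] L; first exact: bailey0.
rewrite /=.
transitivity (\sum_(0 <= M < L.+1) \sum_(0 <= k < 2 * L.+1)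
   p ^+ (M * M.+1) * invqfac p (L%:Z - M%:Z) *
   (a v (k%:Z - L.+1%:Z) * Dd p M (k%:Z - L.+1%:Z))); last first.
  apply: eq_big_nat => M hM.
  rewrite -IH -(@zsum_ge _ M.+1 L.+1); [|exact: supp_D|lia].
  by rewrite /zsum mulr_sumr.
rewrite exchange_big_nat /zsum; apply: eq_bigr => k _.
rewrite aS -mulrA -(Kall (hp hq)) mulr_sumr; apply: eq_bigr => M _.
by rewrite mulrCA.
Qed.

End Main.
Section Ffun.
Variable R : numFieldType.

Definition consf v K (a : 'I_K) (n' : {ffun 'I_v -> 'I_K}) : {ffun 'I_v.+1 -> 'I_K} :=
  [ffun i => if unlift ord0 i is Some j then n' j else a].

Lemma sum_ffunS v K (F : {ffun 'I_v.+1 -> 'I_K} -> R) :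
  \sum_(n : {ffun 'I_v.+1 -> 'I_K}) F n =
  \sum_(a : 'I_K) \sum_(n' : {ffun 'I_v -> 'I_K}) F (consf a n').
Proof.
rewrite pair_big /=.
rewrite (reindex (fun x : 'I_K * {ffun 'I_v -> 'I_K} => consf x.1 x.2)) //.
exists (fun n : {ffun 'I_v.+1 -> 'I_K} => (n ord0, [ffun j : 'I_v => n (lift ord0 j)])) => [[a n'] _ | n _] /=.
  rewrite /consf ffunE unlift_none; congr pair.
  by apply/ffunP => j; rewrite !ffunE liftK.
apply/ffunP => i; rewrite /consf !ffunE.
by case: unliftP => [j ->|->]; rewrite ?ffunE.
Qed.

End Ffun.
Section Lhs.
Variable R : numFieldType.
Variable q : R.
Hypothesis hq : `|q| < 1.
Local Notation p := (q ^+ 2).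

Lemma reidx K L x (G : nat -> R) : (L < K)%N ->
  \sum_(0 <= a < K) p ^+ ((a + x) * (a + x).+1) * invqfac p (L%:Z - (a + x)%N%:Z) * G a =
  \sum_(0 <= M < L.+1) p ^+ (M * M.+1) * invqfac p (L%:Z - M%:Z)
      * (if (x <= M)%N then G (M - x)%N else 0).
Proof.
move=> hLK; have [hx|hx] := leqP x L; last first.
  rewrite big_nat_cond big1; last first.
    move=> a /andP[/andP[_ ha] _].
    by rewrite (@invqfac_neg _ p (L%:Z - (a + x)%N%:Z)) ?mulr0 ?mul0r //; lia.
  rewrite big_nat_cond big1 // => M /andP[/andP[_ hM] _].
  by rewrite ifF ?mulr0 //; apply/negbTE; rewrite -ltnNge; lia.
rewrite [RHS](big_cat_nat _ (n := x)) //=; last lia.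
rewrite [X in X + _]big_nat_cond [X in X + _]big1 ?add0r; last first.
  move=> M /andP[/andP[_ hM] _].
  by rewrite ifF ?mulr0 //; apply/negbTE; rewrite -ltnNge; lia.
rewrite (@big_addn _ _ _ 0 L.+1 x).
rewrite [LHS](big_cat_nat _ (n := L.+1 - x)) //=; last lia.
rewrite [X in _ + X]big_nat_cond [X in _ + X]big1 ?addr0; last first.
  move=> a /andP[/andP[ha _] _].
  by rewrite (@invqfac_neg _ p (L%:Z - (a + x)%N%:Z)) ?mulr0 ?mul0r //; lia.
apply: eq_big_nat => s hs.
by rewrite leq_addl addnK.
Qed.

Definition Nf v K (n : {ffun 'I_v -> 'I_K}) (i : nat) : nat :=
  (\sum_(k < v | (i <= k)%N) (n k : nat))%N.

Lemma Nf_cons0 v K (a : 'I_K) (n' : {ffun 'I_v -> 'I_K}) :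
  Nf (consf a n') 0 = (a + Nf n' 0)%N.
Proof.
rewrite /Nf !big_mkcond big_ord_recl /= /consf ffunE unlift_none; congr addn.
by apply: eq_bigr => k _; rewrite ffunE liftK.
Qed.

Lemma Nf_consS v K (a : 'I_K) (n' : {ffun 'I_v -> 'I_K}) i :
  Nf (consf a n') i.+1 = Nf n' i.
Proof.
rewrite /Nf !big_mkcond big_ord_recl /= add0n.
rewrite [RHS]big_mkcond; apply: eq_bigr => k _.
by rewrite /consf ffunE liftK /bump /= add1n ltnS.
Qed.

Lemma bump0 i : bump 0 i = i.+1.
Proof. by rewrite /bump /= add1n. Qed.

Definition ratio (m : nat) : R := qpoch (q ^+ 3) (q ^+ 6) m / qpoch q (q ^+ 2) m.

Definition inner v K (n : {ffun 'I_v -> 'I_K}) : R :=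
  p ^+ (\sum_(i < v) Nf n i * (Nf n i).+1)%N
  / (\prod_(i < v) qfac p (if (i : nat) == v.-1 then (n i : nat).*2.+1 else n i))
  * (\prod_(i < v | (i : nat) == v.-1) ratio (n i)).

Lemma inner_cons w K (a : 'I_K) (n' : {ffun 'I_w.+1 -> 'I_K}) :
  inner (consf a n') = p ^+ ((a + Nf n' 0) * (a + Nf n' 0).+1)%N / qfac p a * inner n'.
Proof.
rewrite /inner.
have h1 : (\sum_(i < w.+2) Nf (consf a n') i * (Nf (consf a n') i).+1 =
   (a + Nf n' 0) * (a + Nf n' 0).+1 + \sum_(i < w.+1) Nf n' i * (Nf n' i).+1)%N.
  rewrite big_ord_recl Nf_cons0; congr addn.
  by apply: eq_bigr => i _; rewrite ?lift0 ?bump0 Nf_consS.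
have h2 : \prod_(i < w.+2) qfac p (if (i : nat) == w.+2.-1 then (consf a n' i : nat).*2.+1
     else consf a n' i) = qfac p a * \prod_(i < w.+1) qfac p (if (i : nat) == w.+1.-1
     then (n' i : nat).*2.+1 else n' i).
  rewrite big_ord_recl /= /consf ffunE unlift_none; congr (_ * _).
  apply: congr_big => // i _.
  by rewrite ffunE liftK ?lift0 ?bump0 eqSS.
have h3 : \prod_(i < w.+2 | (i : nat) == w.+2.-1) ratio (consf a n' i) =
   \prod_(i < w.+1 | (i : nat) == w.+1.-1) ratio (n' i).
  rewrite big_mkcond [RHS]big_mkcond big_ord_recl /= mul1r.
  apply: congr_big => // i _.
  by rewrite /consf ffunE liftK ?lift0 ?bump0 eqSS.
rewrite h1 h2 h3 exprD invfM; ring.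
Qed.

Lemma inner1 K (a : 'I_K) (n' : {ffun 'I_0 -> 'I_K}) :
  inner (consf a n') = p ^+ (a * a.+1)%N / qfac p (a : nat).*2.+1 * ratio a.
Proof.
rewrite /inner big_ord1 big_ord1 big_mkcond big_ord1 /= Nf_cons0 /Nf big_ord0 addn0.
by rewrite /consf ffunE unlift_none.
Qed.

Lemma invq_if M N : invqfac p (M%:Z - N%:Z) = if (N <= M)%N then (qfac p (M - N))^-1 else 0.
Proof.
case: ifP => h.
  by rewrite invqfac_ge0; [congr (qfac p _)^-1|]; lia.
by apply: invqfac_neg; move/negbT: h; rewrite -ltnNge; lia.
Qed.


Lemma lhs_beta w : forall K L, (L < K)%N ->
  \sum_(n : {ffun 'I_w.+1 -> 'I_K}) inner n * invqfac p (L%:Z - (Nf n 0)%:Z) = beta q w.+1 L.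
Proof.
elim: w => [|w IH] K L hLK.
  rewrite sum_ffunS.
  transitivity (\sum_(a : 'I_K) p ^+ (a * a.+1) * invqfac p (L%:Z - (a : nat)%:Z) * b0 q a).
    apply: eq_bigr => a _.
    rewrite (eq_bigr (fun _ => p ^+ (a * a.+1) * invqfac p (L%:Z - (a : nat)%:Z) * b0 q a)).
      by rewrite sumr_const card_ffun !card_ord expn0 mulr1n.
    move=> n' _; rewrite inner1 Nf_cons0 /Nf big_ord0 addn0 /b0 /ratio.
    by ring.
  rewrite -(big_mkord xpredT (fun a => p ^+ (a * a.+1) * invqfac p (L%:Z - a%:Z) * b0 q a)).
  rewrite (eq_big_nat _ _ (F2 := fun a => p ^+ ((a + 0) * (a + 0).+1)
      * invqfac p (L%:Z - (a + 0)%N%:Z) * b0 q a)); last by move=> a _; rewrite addn0.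
  rewrite reidx //=; apply: eq_big_nat => M _.
  by rewrite subn0.
rewrite sum_ffunS.
transitivity (\sum_(n' : {ffun 'I_w.+1 -> 'I_K}) inner n' * \sum_(0 <= a < K)
   p ^+ ((a + Nf n' 0) * (a + Nf n' 0).+1) * invqfac p (L%:Z - (a + Nf n' 0)%N%:Z)
   * (qfac p a)^-1).
  rewrite exchange_big /=; apply: eq_bigr => n' _.
  rewrite big_mkord mulr_sumr; apply: eq_bigr => a _.
  by rewrite inner_cons Nf_cons0; ring.
under eq_bigr => n' _ do rewrite (reidx _ (fun a => (qfac p a)^-1)) // mulr_sumr.
change (beta q w.+2 L) with (\sum_(0 <= M < L.+1) p ^+ (M * M.+1)
   * invqfac p (L%:Z - M%:Z) * beta q w.+1 M).
rewrite exchange_big; apply: eq_big_nat => M hM.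
rewrite -(IH K M); last lia.
rewrite mulr_sumr; apply: eq_bigr => n' _.
by rewrite (invq_if M (Nf n' 0)) mulrCA.
Qed.

End Lhs.
Lemma rhs_pt (R : numFieldType) (q : R) (hq : `|q| < 1) v L (j : int) :
  (-1) ^+ `|j|%N * q ^ ((2 * v + 1)%:Z * j ^+ 2 + (2 * v)%:Z * j) * leg3 (j + 1)
    * qbinom (q ^+ 2) (2 * L + 1)%:Z (L%:Z - j)
  = qfac (q ^+ 2) (2 * L + 1) * (a q v j * Dd (q ^+ 2) L j).
Proof.
have -> : (2 * v + 1)%:Z * j ^+ 2 + (2 * v)%:Z * j =
  (`|j| * `|j| + 2 * v * (`|j| * `|(j + 1)%R|))%N%:Z.
  rewrite expr2; case: j => m.
    rewrite (_ : `|(m%:Z + 1)%R|%N = m.+1); last lia.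
    rewrite absz_nat; nia.
  rewrite (_ : `|(Negz m + 1)%R|%N = m); last lia.
  rewrite (_ : `|Negz m|%N = m.+1) // NegzE; nia.
change (qbinom (q ^+ 2) (2 * L + 1)%:Z (L%:Z - j)) with (C (q ^+ 2) (2 * L + 1) (L%:Z - j)).
rewrite C_D; last exact: hp hq.
rewrite /a -exprnP.
ring.
Qed.

Theorem mainTheorem15 (R : numFieldType) (q : R) (v L : nat) :
  `|q| < 1 -> (0 < v)%N ->
  let qt := q ^+ 2 in
  \sum_(n : {ffun 'I_v -> 'I_L.+1})
     (let N := fun i : nat => (\sum_(k < v | (i <= k)%N) (n k : nat))%N in
      qt ^+ (\sum_(i < v) N i * (N i).+1)%N
      / (\prod_(i < v) qfac qt (if (i : nat) == v.-1 then (n i).*2.+1 else n i))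
      * (\prod_(i < v | (i : nat) == v.-1)
            (qpoch (q ^+ 3) (q ^+ 6) (n i) / qpoch q (q ^+ 2) (n i)))
      * (qfac qt (2 * L + 1) * invqfac qt (L%:Z - (N 0%N)%:Z)))
  = \sum_(k < (2 * L + 2)%N)
      (let j : int := k%:Z - (L.+1)%:Z in
       (-1) ^+ `|j|%N * q ^ ((2 * v + 1)%:Z * j ^+ 2 + (2 * v)%:Z * j)
       * leg3 (j + 1) * qbinom qt (2 * L + 1)%:Z (L%:Z - j)).
Proof.
move=> hq hv qt; rewrite /qt.
transitivity (qfac (q ^+ 2) (2 * L + 1) * beta q v L).
  case: v hv => // w _.
  rewrite -(lhs_beta hq w (ltnSn L)) mulr_sumr; apply: eq_bigr => n _.
  rewrite /inner /Nf /ratio /=.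
  ring.
rewrite -(bailey hq) /zsum (_ : (2 * L.+1 = 2 * L + 2)%N); last lia.
rewrite big_mkord mulr_sumr; apply: eq_bigr => k _.
by rewrite rhs_pt.
Qed.
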